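(* For every $k\in\mathbb{N}$ and every $a\ge\sqrt{2k+1}$, $$\int_{|x|\ge a}|\phi_k(x)|^2\,dx\le\frac{2^{k+1}}{k!\sqrt{\pi}}\,a^{2k-1}e^{-a^2}.$$
   Context: $\phi_k(x)=\frac{(-1)^k}{\sqrt{2^k k!\sqrt{\pi}}}e^{x^2/2}\frac{d^k}{dx^k}(e^{-x^2})$, $x\in\mathbb{R}$, $k\in\mathbb{N}$, are the one-dimensional Hermite functions. *)

(* Defs.v *)
From Stdlib Require Import Reals Arith.
Open Scope R_scope.

(* A family of iterated derivatives of x |-> exp(-x^2):
   D 0 = exp(-x^2) and D (n+1) is the derivative of D n everywhere.
   Such a family is uniquely determined (D k = d^k/dx^k e^{-x^2}). *)
Definition iter_derivs_gauss (D : nat -> R -> R) : Prop :=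
  (forall x, D 0%nat x = exp (- x ^ 2)) /\
  (forall (n : nat) (x : R), derivable_pt_lim (D n) x (D (S n) x)).

Definition hermite_fun (D : nat -> R -> R) (k : nat) (x : R) : R :=
  (-1) ^ k / sqrt (2 ^ k * INR (fact k) * sqrt PI) * exp (x ^ 2 / 2) * D k x.

(* L is the (improper) integral of f over { x : |x| >= a }, i.e.
   L = lim_{b -> +oo} ( int_{-b}^{-a} f + int_a^b f ), with f Riemann
   integrable on every bounded piece. *)
Definition tail_integral (f : R -> R) (a L : R) : Prop :=
  (forall b, a <= b ->
     inhabited (Riemann_integrable f a b) /\
     inhabited (Riemann_integrable f (- b) (- a))) /\
  (forall eps, 0 < eps -> exists B, forall b, B <= b ->
     forall (pr1 : Riemann_integrable f (- b) (- a))
            (pr2 : Riemann_integrable f a b),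
       Rabs (RiemannInt pr1 + RiemannInt pr2 - L) < eps).

(* Main.v *)
Require Import Defs.
From Stdlib Require Import Reals Arith ZArith Lra Lia FunctionalExtensionality Classical.
From Coquelicot Require Import Coquelicot.
Open Scope R_scope.
Lemma m1sq k : ((-1)^k)^2 = 1.
Proof. rewrite <- pow_mult, Nat.mul_comm, pow_mult. replace ((-1)^2) with 1 by ring. apply pow1. Qed.

Lemma D1 D : iter_derivs_gauss D -> forall x, D 1%nat x = -2*x*exp(-x^2).
Proof.
  intros [H0 HS] x.
  assert (E: D 0%nat = fun y => exp (- y^2)) by (apply functional_extensionality; auto).
  pose proof (HS 0%nat x) as Hd. rewrite E in Hd.
  assert (Hd2 : is_derive (fun y => exp (- y^2)) x (-2*x*exp(-x^2))).
  { auto_derive; auto. replace (- (x*(x*1))) with (-x^2) by ring. ring. }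
  apply is_derive_Reals in Hd2. eapply uniqueness_limite; eauto.
Qed.

Lemma Drec D : iter_derivs_gauss D -> forall n x,
  D (S (S n)) x = -2*x*D (S n) x - 2*INR (S n) * D n x.
Proof.
  intros HD. pose proof HD as [H0 HS].
  induction n as [|n IH]; intros x.
  - assert (E: D 1%nat = fun y => -2*y*exp(-y^2)) by (apply functional_extensionality; apply D1; auto).
    pose proof (HS 1%nat x) as Hd. rewrite E in Hd.
    assert (Hd2 : is_derive (fun y => -2*y*exp (- y^2)) x (-2*x*D 1%nat x - 2*INR 1 * D 0%nat x)).
    { rewrite D1, H0 by auto. auto_derive; auto. replace (- (x*(x*1))) with (-x^2) by ring. simpl. ring. }
    apply is_derive_Reals in Hd2. eapply uniqueness_limite; eauto.
  - assert (E: D (S (S n)) = fun y => -2*y*D (S n) y - 2*INR (S n) * D n y)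
      by (apply functional_extensionality; apply IH).
    pose proof (HS (S (S n)) x) as Hd. rewrite E in Hd.
    assert (A1 : is_derive (D (S n)) x (D (S (S n)) x)) by (apply is_derive_Reals; auto).
    assert (A0 : is_derive (D n) x (D (S n) x)) by (apply is_derive_Reals; auto).
    assert (Hd2 : is_derive (fun y => -2*y*D (S n) y - 2*INR (S n) * D n y) x
         (-2 * D (S n) x + -2*x*D (S (S n)) x - 2*INR (S n) * D (S n) x)).
    { apply (is_derive_minus (fun y => -2*y*D (S n) y) (fun y => 2*INR (S n) * D n y)).
      - apply (is_derive_mult (fun y => -2*y) (D (S n))); auto.
        + auto_derive; auto. ring.
        + intros; apply Rmult_comm.
      - apply (is_derive_scal (D n)); auto. }
    apply is_derive_Reals in Hd2.
    rewrite (uniqueness_limite _ _ _ _ Hd Hd2). rewrite !S_INR. ring.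
Qed.

Lemma seq_bound (s : nat -> R) y : 0 < y -> s 0%nat = 1 -> s 1%nat = 2*y ->
  (forall n, s (S (S n)) = 2*y*s (S n) - 2*INR (S n)*s n) ->
  forall n, 2*INR n <= y^2 ->
   0 <= s n /\ y * s n <= s (S n) /\ s (S n) <= 2*y*s n /\ s n <= (2*y)^n.
Proof.
  intros Hy H0 H1 Hr. induction n as [|n IH]; intros Hn.
  - rewrite H0, H1. simpl. lra.
  - assert (Hn' : 2*INR n <= y^2) by (rewrite S_INR in Hn; pose proof (pos_INR n); lra).
    destruct (IH Hn') as [A [B [C E]]].
    assert (F : 0 <= s (S n)) by nra.
    split; [exact F|]. split; [|split].
    + rewrite Hr.
      assert (G1 : y * (2*INR (S n) * s n) <= 2 * INR (S n) * s (S n)).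
      { pose proof (pos_INR (S n)). nra. }
      assert (G2 : 2*INR (S n) * s (S n) <= y^2 * s (S n)) by nra.
      assert (G3 : 2*INR (S n) * s n <= y * s (S n)).
      { apply (Rmult_le_reg_l y); [lra|]. simpl in G2. nra. }
      lra.
    + rewrite Hr. pose proof (pos_INR (S n)). nra.
    + simpl. assert (0 <= 2*y) by lra. nra.
Qed.


Lemma sq_bound (s : nat -> R) x : x <> 0 -> s 0%nat = 1 -> s 1%nat = 2*x ->
  (forall n, s (S (S n)) = 2*x*s (S n) - 2*INR (S n)*s n) ->
  forall k, 2*INR k <= x^2 -> (s k)^2 <= ((2*x)^2)^k.
Proof.
  intros Hx H0 H1 Hr k Hk.
  destruct (Rlt_or_le 0 x) as [Hp|Hn].
  - destruct (seq_bound s x Hp H0 H1 Hr k Hk) as [A [_ [_ B]]].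
    rewrite <- pow_mult, Nat.mul_comm, pow_mult. apply pow_incr. lra.
  - set (t := fun n => (-1)^n * s n).
    assert (Hy : 0 < -x) by lra.
    assert (T0 : t 0%nat = 1) by (unfold t; rewrite H0; simpl; ring).
    assert (T1 : t 1%nat = 2*(-x)) by (unfold t; rewrite H1; simpl; ring).
    assert (Tr : forall n, t (S (S n)) = 2*(-x)*t (S n) - 2*INR (S n)*t n).
    { intros n; unfold t; rewrite Hr; simpl; ring. }
    assert (Hk' : 2*INR k <= (-x)^2) by (replace ((-x)^2) with (x^2) by ring; auto).
    destruct (seq_bound t (-x) Hy T0 T1 Tr k Hk') as [A [_ [_ B]]].
    replace ((2*x)^2) with ((2*(-x))^2) by ring.
    replace (s k ^ 2) with (t k ^ 2) by (unfold t; rewrite Rpow_mult_distr, m1sq; ring).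
    rewrite <- pow_mult, Nat.mul_comm, pow_mult. apply pow_incr. lra.
Qed.
Definition hseq (D : nat -> R -> R) x n := (-1)^n * D n x * exp (x^2).
Definition Cst k := 2^k * INR (fact k) * sqrt PI.
Lemma Cst_pos k : 0 < Cst k.
Proof. unfold Cst. apply Rmult_lt_0_compat; [apply Rmult_lt_0_compat|].
 apply pow_lt; lra. apply lt_0_INR, lt_O_fact. apply sqrt_lt_R0, PI_RGT_0. Qed.

Lemma f_eq D k x : Rabs (hermite_fun D k x)^2 = (hseq D x k)^2 * exp(-x^2) / Cst k.
Proof.
  unfold hermite_fun, hseq. pose proof (Cst_pos k) as HC.
  change (2 ^ k * INR (fact k) * sqrt PI) with (Cst k).
  assert (HE : exp (x^2) = exp (x^2/2) * exp (x^2/2)) by (rewrite <- exp_plus; f_equal; field).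
  assert (HE2 : exp (-x^2) = / (exp (x^2/2) * exp (x^2/2))) by (rewrite <- HE, <- exp_Ropp; auto).
  rewrite HE2, HE, pow2_abs.
  pose proof (exp_pos (x^2/2)) as Hp.
  assert (Hs : 0 < sqrt (Cst k)) by (apply sqrt_lt_R0; auto).
  replace (((-1)^k / sqrt (Cst k) * exp (x^2/2) * D k x)^2) with
     (((-1)^k)^2 * exp (x^2/2)^2 * D k x ^2 / (sqrt (Cst k))^2) by (field; lra).
  replace (((-1)^k * D k x * (exp (x^2/2) * exp (x^2/2)))^2 * /(exp (x^2/2) * exp (x^2/2)) / Cst k)
   with (((-1)^k)^2 * exp (x^2/2)^2 * D k x ^2 / Cst k) by (field; lra).
  rewrite pow2_sqrt; lra.
Qed.
Definition Kc k := 2^k / (INR (fact k) * sqrt PI).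
Definition Pf k x := - (Kc k * x^(2*k) * exp(-x^2) / x).
Definition dPf k x := Kc k * exp(-x^2) * (2*x^(2*k) - (2*INR k - 1)*x^(2*k)/x^2).
Lemma predpow n x : x <> 0 -> INR n * x^(pred n) = INR n * x^n / x.
Proof. intros Hx. destruct n. simpl; field; auto. simpl pred. simpl pow. field. auto. Qed.
Lemma dP k x : x <> 0 -> is_derive (Pf k) x (dPf k x).
Proof.
  intros Hx. unfold Pf, dPf. auto_derive. auto.
  rewrite predpow by auto. replace (k + (k+0))%nat with (2*k)%nat by lia. rewrite mult_INR. simpl (INR 2).
  replace (- (x*(x*1))) with (-x^2) by ring. field. auto.
Qed.
Lemma dP_cont k x : x <> 0 -> continuous (dPf k) x.
Proof. intros Hx. apply (ex_derive_continuous (dPf k)). unfold dPf. auto_derive. auto. Qed.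

Lemma mono_lim (J : R -> R) a M :
  (forall b1 b2, a <= b1 -> b1 <= b2 -> J b1 <= J b2) ->
  (forall b, a <= b -> J b <= M) ->
  exists S, S <= M /\ forall eps, 0 < eps -> exists B, forall b, B <= b -> Rabs (J b - S) < eps.
Proof.
  intros Hm Hb.
  set (E := fun y => exists b, a <= b /\ y = J b).
  assert (HB : bound E) by (exists M; intros y [b [H1 ->]]; auto).
  assert (HE : exists y, E y) by (exists (J a); exists a; split; [lra|auto]).
  destruct (completeness E HB HE) as [S [Hub Hlub]].
  exists S. split.
  - apply Hlub. intros y [b [H1 ->]]; auto.
  - intros eps Heps.
    destruct (Classical_Prop.classic (exists b, a <= b /\ S - eps < J b)) as [[b0 [Hb0 Hj]]|Hn].
    + exists (Rmax a b0). intros b Hb'.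
      assert (a <= b) by (pose proof (Rmax_l a b0); lra).
      assert (b0 <= b) by (pose proof (Rmax_r a b0); lra).
      assert (J b <= S) by (apply Hub; exists b; auto).
      pose proof (Hm b0 b Hb0 H0).
      apply Rabs_def1; lra.
    + exfalso.
      assert (S <= S - eps); [|lra].
      apply Hlub. intros y [b [H1 ->]].
      destruct (Rle_or_lt (J b) (S - eps)); auto. exfalso; apply Hn; exists b; auto.
Qed.

Section Main.
Variable D : nat -> R -> R.
Hypothesis HD : iter_derivs_gauss D.

Lemma h0 x : hseq D x 0 = 1.
Proof. unfold hseq. destruct HD as [H0 _]. rewrite H0, pow_O.
  rewrite Rmult_1_l, <- exp_plus. replace (-x^2 + x^2) with 0 by ring. apply exp_0. Qed.
Lemma h1 x : hseq D x 1 = 2*x.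
Proof. unfold hseq. rewrite D1 by auto. rewrite pow_1.
  assert (E : exp(-x^2)*exp(x^2) = 1).
  { rewrite <- exp_plus. replace (-x^2 + x^2) with 0 by ring. apply exp_0. }
  replace (-1 * (-2*x*exp(-x^2)) * exp (x^2)) with (2*x*(exp(-x^2) * exp (x^2))) by ring.
  rewrite E. ring. Qed.
Lemma hr x n : hseq D x (S (S n)) = 2*x*hseq D x (S n) - 2*INR (S n)*hseq D x n.
Proof. unfold hseq. rewrite Drec by auto. simpl. ring. Qed.

Lemma X_nonneg k x : 0 <= x^(2*k).
Proof. rewrite pow_mult. apply pow_le. apply pow2_ge_0. Qed.

Lemma f_le k x : 2*INR k + 1 <= x^2 -> Rabs (hermite_fun D k x)^2 <= dPf k x.
Proof.
  intros Hk. rewrite f_eq.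
  assert (Hx : x <> 0) by (intro; subst; simpl in Hk; pose proof (pos_INR k); lra).
  assert (Hb := sq_bound (hseq D x) x Hx (h0 x) (h1 x) (hr x) k ltac:(lra)).
  assert (Id : ((2*x)^2)^k = 2^k*2^k*x^(2*k)).
  { rewrite pow_mult, <- !Rpow_mult_distr. f_equal. ring. }
  rewrite Id in Hb.
  pose proof (Cst_pos k) as HC. pose proof (exp_pos (-x^2)) as He.
  assert (S1 : hseq D x k ^2 * exp(-x^2) / Cst k <= 2^k*2^k*x^(2*k) * exp(-x^2) / Cst k).
  { unfold Rdiv. apply Rmult_le_compat_r. left; apply Rinv_0_lt_compat; auto.
    apply Rmult_le_compat_r; lra. }
  assert (S2 : 2^k*2^k*x^(2*k) * exp(-x^2) / Cst k = Kc k * x^(2*k) * exp(-x^2)).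
  { unfold Kc, Cst. assert (0 < INR (fact k)) by apply lt_0_INR, lt_O_fact.
    assert (0 < sqrt PI) by apply sqrt_lt_R0, PI_RGT_0. assert (0 < 2^k) by (apply pow_lt; lra).
    field. lra. }
  assert (HK : 0 < Kc k).
  { unfold Kc. apply Rdiv_lt_0_compat. apply pow_lt; lra.
    apply Rmult_lt_0_compat. apply lt_0_INR, lt_O_fact. apply sqrt_lt_R0, PI_RGT_0. }
  pose proof (X_nonneg k x) as HX.
  assert (S3 : x^(2*k) <= 2*x^(2*k) - (2*INR k - 1)*x^(2*k)/x^2).
  { assert (Hx2 : 0 < x^2) by (pose proof (pos_INR k); lra).
    assert ((2*INR k - 1)*x^(2*k)/x^2 <= x^(2*k)); [|lra].
    apply (Rmult_le_reg_r (x^2)); auto. unfold Rdiv. rewrite Rmult_assoc, Rinv_l by lra.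
    nra. }
  unfold dPf. rewrite S2 in S1.
  assert (Kc k * x^(2*k) * exp(-x^2) <= Kc k * exp(-x^2) * (2*x^(2*k) - (2*INR k - 1)*x^(2*k)/x^2)).
  { replace (Kc k * x^(2*k)*exp(-x^2)) with ((Kc k*exp(-x^2))*x^(2*k)) by ring.
    apply Rmult_le_compat_l; [|lra]. apply Rmult_le_pos; lra. }
  lra.
Qed.

Definition fk k := fun x => Rabs (hermite_fun D k x)^2.

Lemma fk_cont k x : continuous (fk k) x.
Proof.
  destruct HD as [_ HS].
  apply continuous_ext with (fun y => (hermite_fun D k y)^2).
  { intros; unfold fk; rewrite pow2_abs; auto. }
  apply (ex_derive_continuous (fun y => (hermite_fun D k y)^2)).
  unfold hermite_fun. apply ex_derive_pow. apply ex_derive_mult.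
  - auto_derive. auto.
  - exists (D (S k) x). apply is_derive_Reals. auto.
Qed.

Lemma fk_int k u v : ex_RInt (fk k) u v.
Proof. apply (ex_RInt_continuous (V:=R_CompleteNormedModule)). intros; apply fk_cont. Qed.

Lemma int_bound k l r : l <= r -> (forall x, l <= x <= r -> 2*INR k + 1 <= x^2) ->
  RInt (fk k) l r <= Pf k r - Pf k l.
Proof.
  intros Hlr Hx.
  assert (Hnz : forall x, l <= x <= r -> x <> 0).
  { intros x Hi E. specialize (Hx x Hi). subst. simpl in Hx. pose proof (pos_INR k); lra. }
  assert (HI : is_RInt (dPf k) l r (minus (Pf k r) (Pf k l))).
  { apply (is_RInt_derive (V:=R_CompleteNormedModule)); rewrite Rmin_left, Rmax_right by lra; intros x Hi.
    apply dP; auto. apply dP_cont; auto. }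
  assert (HR : RInt (dPf k) l r = Pf k r - Pf k l) by (apply is_RInt_unique; auto).
  rewrite <- HR. apply RInt_le; auto. apply fk_int. eexists; eauto.
  intros x Hi. apply f_le. apply Hx; lra.
Qed.

Lemma fk_nonneg k x : 0 <= fk k x.
Proof. unfold fk. apply pow2_ge_0. Qed.

Lemma fk_chasles k u v w : u <= v <= w -> RInt (fk k) u v <= RInt (fk k) u w.
Proof.
  intros Hi. rewrite <- (RInt_Chasles (fk k) u v w) by apply fk_int.
  assert (0 <= RInt (fk k) v w). { apply RInt_ge_0. lra. apply fk_int. intros; apply fk_nonneg. }
  unfold plus; simpl. lra.
Qed.

Lemma fk_chasles2 k u v w : u <= v <= w -> RInt (fk k) v w <= RInt (fk k) u w.
Proof.
  intros Hi. rewrite <- (RInt_Chasles (fk k) u v w) by apply fk_int.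
  assert (0 <= RInt (fk k) u v). { apply RInt_ge_0. lra. apply fk_int. intros; apply fk_nonneg. }
  unfold plus; simpl. lra.
Qed.

End Main.

Lemma evp k x : (-x)^(2*k) = x^(2*k).
Proof. rewrite !pow_mult. f_equal. ring. Qed.

Theorem mainTheorem6 :
  forall (D : nat -> R -> R), iter_derivs_gauss D ->
  forall (k : nat) (a : R), sqrt (2 * INR k + 1) <= a ->
  exists L : R,
    tail_integral (fun x => Rabs (hermite_fun D k x) ^ 2) a L /\
    L <= 2 ^ (S k) / (INR (fact k) * sqrt PI)
         * powerRZ a (2 * Z.of_nat k - 1) * exp (- a ^ 2).
Proof.
  intros D HD k a Ha.
  pose proof (pos_INR k) as Hk0.
  assert (Ha1 : 1 <= a).
  { eapply Rle_trans; [|exact Ha]. apply Rle_trans with (sqrt 1); [rewrite sqrt_1; lra | apply sqrt_le_1_alt; lra]. }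
  assert (Ha2 : 2*INR k + 1 <= a^2).
  { rewrite <- (pow2_sqrt (2*INR k + 1)) by lra. apply pow_incr. split; auto. apply sqrt_pos. }
  assert (HK : 0 < Kc k).
  { unfold Kc. apply Rdiv_lt_0_compat. apply pow_lt; lra.
    apply Rmult_lt_0_compat. apply lt_0_INR, lt_O_fact. apply sqrt_lt_R0, PI_RGT_0. }
  set (M := Kc k * a^(2*k) * exp(-a^2)/a).
  assert (Pnonneg : forall b, a <= b -> 0 <= Kc k * b^(2*k) * exp(-b^2)/b).
  { intros b Hb. unfold Rdiv. apply Rmult_le_pos. apply Rmult_le_pos. apply Rmult_le_pos. lra.
    apply X_nonneg. left; apply exp_pos. left; apply Rinv_0_lt_compat; lra. }
  set (J1 := fun b => RInt (fk D k) a b).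
  set (J2 := fun b => RInt (fk D k) (-b) (-a)).
  destruct (mono_lim J1 a M) as [S1 [HS1 HL1]].
  { intros b1 b2 H1 H2. apply fk_chasles; auto. }
  { intros b Hb. unfold J1. eapply Rle_trans. apply int_bound; auto.
    intros x Hx. eapply Rle_trans; [exact Ha2|]. apply pow_incr; lra.
    unfold Pf. fold M. specialize (Pnonneg b Hb). lra. }
  destruct (mono_lim J2 a M) as [S2 [HS2 HL2]].
  { intros b1 b2 H1 H2. unfold J2. apply fk_chasles2; auto. lra. }
  { intros b Hb. unfold J2. eapply Rle_trans. apply int_bound; auto. lra.
    intros x Hx. eapply Rle_trans; [exact Ha2|].
    replace (x^2) with ((-x)^2) by ring. apply pow_incr; lra.
    unfold Pf. rewrite !evp. replace (- (-a)^2) with (-a^2) by ring.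
    replace (- (-b)^2) with (-b^2) by ring.
    specialize (Pnonneg b Hb). unfold M.
    replace (- (Kc k * a ^ (2 * k) * exp (- a ^ 2) / - a)) with (Kc k * a ^ (2 * k) * exp (- a ^ 2) / a) by (field; lra).
    replace (- (Kc k * b ^ (2 * k) * exp (- b ^ 2) / - b)) with (Kc k * b ^ (2 * k) * exp (- b ^ 2) / b) by (field; lra).
    lra. }
  exists (S1 + S2). split.
  - split.
    + intros b Hb. split; constructor; apply ex_RInt_Reals_0; apply (fk_int D HD k).
    + intros eps Heps.
      destruct (HL1 (eps/2) ltac:(lra)) as [B1 HB1].
      destruct (HL2 (eps/2) ltac:(lra)) as [B2 HB2].
      exists (Rmax B1 B2). intros b Hb pr1 pr2.
      rewrite <- !RInt_Reals.
      change (Rabs (J2 b + J1 b - (S1 + S2)) < eps).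
      specialize (HB1 b ltac:(pose proof (Rmax_l B1 B2); lra)).
      specialize (HB2 b ltac:(pose proof (Rmax_r B1 B2); lra)).
      replace (J2 b + J1 b - (S1 + S2)) with ((J1 b - S1) + (J2 b - S2)) by ring.
      eapply Rle_lt_trans. apply Rabs_triang. lra.
  - assert (HP : powerRZ a (2*Z.of_nat k - 1) = a^(2*k) / a).
    { replace (2*Z.of_nat k - 1)%Z with (Z.of_nat (2*k) + (-1))%Z by lia.
      rewrite powerRZ_add by lra. rewrite <- pow_powerRZ. simpl (powerRZ a (-1)).
      field. lra. }
    rewrite HP. replace (2^(S k)) with (2*2^k) by (simpl; ring).
    assert (2*M = 2 * 2 ^ k / (INR (fact k) * sqrt PI) * (a ^ (2 * k) / a) * exp (- a ^ 2)).
    { unfold M, Kc. assert (0 < INR (fact k)) by apply lt_0_INR, lt_O_fact.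
      assert (0 < sqrt PI) by apply sqrt_lt_R0, PI_RGT_0. field. lra. }
    lra.
Qed.
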